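(* For every formula $\varphi$ (in the syntax described in the context) there exists a formula $\varphi'$ in normal form such that $\varphi' \equiv \varphi$ and $|\varphi'| \leq 4^{7|\varphi|}$.
   Context: Fix a finite set $Ap$ of atomic propositions. A word is an infinite sequence $w = w[0]w[1]w[2]\dots$ of letters of $\Sigma = 2^{Ap}$, and $w_i$ denotes the suffix $w[i]w[i+1]\dots$. Formulas are generated by the grammar $\varphi ::= \mathbf{true} \mid \mathbf{false} \mid a \mid \neg a \mid \varphi\wedge\varphi \mid \varphi\vee\varphi \mid \mathbf{X}\varphi \mid \varphi\,\mathbf{U}\,\varphi \mid \varphi\,\mathbf{W}\,\varphi \mid \mathbf{GF}\varphi \mid \mathbf{FG}\varphi$ with $a \in Ap$, where $\mathbf{GF}$ and $\mathbf{FG}$ are single unary operators (the limit operators). Semantics: $w\models\mathbf{true}$ always, $w\not\models\mathbf{false}$; $w\models a$ iff $a\in w[0]$; $w\models\neg a$ iff $a\notin w[0]$; $\wedge,\vee$ as usual; $w\models\mathbf{X}\varphi$ iff $w_1\models\varphi$; $w\models\varphi\mathbf{U}\psi$ iff there is $k$ with $w_k\models\psi$ and $w_j\models\varphi$ for all $j<k$; $w\models\varphi\mathbf{W}\psi$ iff $w_k\models\varphi$ for all $k$ or $w\models\varphi\mathbf{U}\psi$; $w\models\mathbf{GF}\varphi$ iff $w_k\models\varphi$ for infinitely many $k$; $w\models\mathbf{FG}\varphi$ iff there is $n$ with $w_k\models\varphi$ for all $k\geq n$. Two formulas are equivalent ($\equiv$) if they are satisfied by exactly the same words. The syntax tree $T_\varphi$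 has leaves $\mathbf{true},\mathbf{false},a,\neg a$ and one internal node per operator occurrence with its operands as children; $|\varphi|$ is the number of nodes of $T_\varphi$. A node whose subformula has top operator $\mathbf{U}$ (resp. $\mathbf{W}$, $\mathbf{X}$, $\mathbf{GF}$, $\mathbf{FG}$) is a $\mathbf{U}$-node (resp. $\mathbf{W}$-, $\mathbf{X}$-, $\mathbf{GF}$-, $\mathbf{FG}$-node); $\mathbf{GF}$- and $\mathbf{FG}$-nodes are limit nodes; $\mathbf{U}$-, $\mathbf{W}$-, $\mathbf{X}$-, $\mathbf{GF}$-, $\mathbf{FG}$-nodes are temporal nodes. A node is under another node if it is a proper descendant of it in $T_\varphi$. A formula is in normal form if (1) no $\mathbf{U}$-node is under a $\mathbf{W}$-node; (2) no limit node is under another temporal node; (3) no $\mathbf{W}$-node is under a $\mathbf{GF}$-node and no $\mathbf{U}$-node is under an $\mathbf{FG}$-node. *)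

(* Defs.v *)
From mathcomp Require Import all_boot.
Set Implicit Arguments.
Unset Strict Implicit.
Unset Printing Implicit Defensive.

Inductive formula (Ap : Type) : Type :=
  | FTrue | FFalse
  | FAtom of Ap
  | FNAtom of Ap
  | FAnd of formula Ap & formula Ap
  | FOr of formula Ap & formula Ap
  | FX of formula Ap
  | FU of formula Ap & formula Ap
  | FW of formula Ap & formula Ap
  | FGF of formula Ap
  | FFG of formula Ap.

Arguments FTrue {Ap}. Arguments FFalse {Ap}.

Definition word (Ap : finType) := nat -> {set Ap}.

Definition suffix (Ap : finType) (w : word Ap) (i : nat) : word Ap :=
  fun k => w (i + k).

Fixpoint sat (Ap : finType) (w : word Ap) (f : formula Ap) : Prop :=
  match f with
  | FTrue => True
  | FFalse => False
  | FAtom a => a \in w 0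
  | FNAtom a => a \notin w 0
  | FAnd f1 f2 => sat w f1 /\ sat w f2
  | FOr f1 f2 => sat w f1 \/ sat w f2
  | FX f1 => sat (suffix w 1) f1
  | FU f1 f2 => exists k, sat (suffix w k) f2 /\ forall j, j < k -> sat (suffix w j) f1
  | FW f1 f2 => (forall k, sat (suffix w k) f1) \/
                (exists k, sat (suffix w k) f2 /\ forall j, j < k -> sat (suffix w j) f1)
  | FGF f1 => forall n, exists k, n <= k /\ sat (suffix w k) f1
  | FFG f1 => exists n, forall k, n <= k -> sat (suffix w k) f1
  end.

Definition fequiv (Ap : finType) (f g : formula Ap) : Prop :=
  forall w : word Ap, sat w f <-> sat w g.

Fixpoint fsize (Ap : Type) (f : formula Ap) : nat :=
  match f with
  | FTrue | FFalse | FAtom _ | FNAtom _ => 1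
  | FAnd f1 f2 | FOr f1 f2 | FU f1 f2 | FW f1 f2 => (fsize f1 + fsize f2).+1
  | FX f1 | FGF f1 | FFG f1 => (fsize f1).+1
  end.

Fixpoint hasU (Ap : Type) (f : formula Ap) : bool :=
  match f with
  | FTrue | FFalse | FAtom _ | FNAtom _ => false
  | FAnd f1 f2 | FOr f1 f2 | FW f1 f2 => hasU f1 || hasU f2
  | FU _ _ => true
  | FX f1 | FGF f1 | FFG f1 => hasU f1
  end.

Fixpoint hasW (Ap : Type) (f : formula Ap) : bool :=
  match f with
  | FTrue | FFalse | FAtom _ | FNAtom _ => false
  | FAnd f1 f2 | FOr f1 f2 | FU f1 f2 => hasW f1 || hasW f2
  | FW _ _ => true
  | FX f1 | FGF f1 | FFG f1 => hasW f1
  end.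

Fixpoint hasLimit (Ap : Type) (f : formula Ap) : bool :=
  match f with
  | FTrue | FFalse | FAtom _ | FNAtom _ => false
  | FAnd f1 f2 | FOr f1 f2 | FU f1 f2 | FW f1 f2 => hasLimit f1 || hasLimit f2
  | FX f1 => hasLimit f1
  | FGF _ | FFG _ => true
  end.

(* Normal form:
   (1) no U-node under a W-node;
   (2) no limit node under another temporal node (U, W, X, GF, FG);
   (3) no W-node under a GF-node and no U-node under an FG-node.
   "Under" = proper descendant, so each condition is checked on the children
   of the relevant node, recursively for every node of the tree. *)
Fixpoint normal_form (Ap : Type) (f : formula Ap) : bool :=
  match f with
  | FTrue | FFalse | FAtom _ | FNAtom _ => true
  | FAnd f1 f2 | FOr f1 f2 => normal_form f1 && normal_form f2
  | FX f1 => ~~ hasLimit f1 && normal_form f1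
  | FU f1 f2 => ~~ hasLimit f1 && ~~ hasLimit f2 && normal_form f1 && normal_form f2
  | FW f1 f2 => ~~ hasU f1 && ~~ hasU f2 && ~~ hasLimit f1 && ~~ hasLimit f2
                && normal_form f1 && normal_form f2
  | FGF f1 => ~~ hasLimit f1 && ~~ hasW f1 && normal_form f1
  | FFG f1 => ~~ hasLimit f1 && ~~ hasU f1 && normal_form f1
  end.

(* Main.v *)
Require Import Defs.
From mathcomp Require Import all_boot.
From mathcomp Require Import zify.
From Stdlib Require Import Classical Lia.

Set Implicit Arguments.
Unset Strict Implicit.
Unset Printing Implicit Defensive.
Lemma sat_ext (Ap : finType) (f : formula Ap) (w w' : word Ap) :
  (forall k, w k = w' k) -> (sat w f <-> sat w' f).
Proof.
elim: f w w' => [||a|a|a IHa b IHb|a IHa b IHb|a IHa|a IHa b IHb|a IHa b IHb|a IHa|a IHa] w w' E /=.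
- by [].
- by [].
- by move: (E 0) => ->.
- by move: (E 0) => ->.
- by rewrite (IHa w w' E) (IHb w w' E).
- by rewrite (IHa w w' E) (IHb w w' E).
- by apply: IHa => k; exact: E.
- have Es : forall i k, Defs.suffix w i k = Defs.suffix w' i k by move=> i k; exact: E.
  split=> -[k [H1 H2]]; exists k; split.
  + by apply/(IHb _ _ (Es k)).
  + by move=> j Hj; apply/(IHa _ _ (Es j)); apply: H2.
  + by apply/(IHb _ _ (Es k)).
  + by move=> j Hj; apply/(IHa _ _ (Es j)); apply: H2.
- have Es : forall i k, Defs.suffix w i k = Defs.suffix w' i k by move=> i k; exact: E.
  split=> -[H|[k [H1 H2]]].
  + by left=> k; apply/(IHa _ _ (Es k)).
  + right; exists k; split; first by apply/(IHb _ _ (Es k)).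
    by move=> j Hj; apply/(IHa _ _ (Es j)); apply: H2.
  + by left=> k; apply/(IHa _ _ (Es k)).
  + right; exists k; split; first by apply/(IHb _ _ (Es k)).
    by move=> j Hj; apply/(IHa _ _ (Es j)); apply: H2.
- have Es : forall i k, Defs.suffix w i k = Defs.suffix w' i k by move=> i k; exact: E.
  split=> H n; have [k [Hk H']] := H n; exists k; split => //.
  + by apply/(IHa _ _ (Es k)).
  + by apply/(IHa _ _ (Es k)).
- have Es : forall i k, Defs.suffix w i k = Defs.suffix w' i k by move=> i k; exact: E.
  split=> -[n H]; exists n => k Hk.
  + by apply/(IHa _ _ (Es k)); apply: H.
  + by apply/(IHa _ _ (Es k)); apply: H.
Qed.

Definition holds (Ap : finType) (w : word Ap) (i : nat) (f : formula Ap) :=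
  sat (Defs.suffix w i) f.

Lemma hs (Ap : finType) (w : word Ap) i k f :
  sat (Defs.suffix (Defs.suffix w i) k) f <-> holds w (i + k) f.
Proof. by apply: sat_ext => j; rewrite /Defs.suffix addnA. Qed.

Lemma holds0 (Ap : finType) (w : word Ap) f : sat w f <-> holds w 0 f.
Proof. by apply: sat_ext => j; rewrite /Defs.suffix add0n. Qed.

Definition GFh (Ap : finType) (w : word Ap) f := forall n, exists k, n <= k /\ holds w k f.
Definition FGh (Ap : finType) (w : word Ap) f := exists n, forall k, n <= k -> holds w k f.

Lemma holds_X (Ap : finType) (w : word Ap) i f : holds w i (FX f) <-> holds w (i + 1) f.
Proof. exact: (hs w i 1 f). Qed.

Lemma holds_U (Ap : finType) (w : word Ap) i a b : holds w i (FU a b) <->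
  exists k, holds w (i + k) b /\ forall j, j < k -> holds w (i + j) a.
Proof.
split=> -[k [H1 H2]]; exists k; split; try (by apply/hs);
  by move=> j Hj; apply/hs; apply: H2.
Qed.

Lemma holds_W (Ap : finType) (w : word Ap) i a b : holds w i (FW a b) <->
  (forall k, holds w (i + k) a) \/
  exists k, holds w (i + k) b /\ forall j, j < k -> holds w (i + j) a.
Proof.
split=> -[H|[k [H1 H2]]].
- by left=> k; apply/hs; apply: H.
- by right; exists k; split; [apply/hs; exact: H1 | move=> j Hj; apply/hs; apply: H2].
- by left=> k; apply/hs; apply: H.
- by right; exists k; split; [apply/hs; exact: H1 | move=> j Hj; apply/hs; apply: H2].
Qed.

Lemma holds_GF (Ap : finType) (w : word Ap) i f : holds w i (FGF f) <-> GFh w f.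
Proof.
split=> H n.
- have [k [Hk H']] := H n; exists (i + k); split; first lia.
  by apply/hs.
- have [k [Hk H']] := H (n + i); exists (k - i); split; first lia.
  by apply/hs; have -> : i + (k - i) = k by lia.
Qed.

Lemma holds_FG (Ap : finType) (w : word Ap) i f : holds w i (FFG f) <-> FGh w f.
Proof.
split=> -[n H].
- exists (i + n) => k Hk; have := H (k - i); rewrite -/(holds _ _ _).
  move=> H'; have /hs : sat (Defs.suffix (Defs.suffix w i) (k - i)) f by apply: H'; lia.
  by have -> : i + (k - i) = k by lia.
- exists n => k Hk; apply/hs; apply: H; lia.
Qed.

Inductive lform (Ap : Type) : Type :=
  | LTrue | LFalse | LAtom of Ap | LNAtom of Ap
  | LAnd of lform Ap & lform Ap | LOr of lform Ap & lform Ap | LX of lform Ap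
  | LU of bool & lform Ap & lform Ap | LW of bool & lform Ap & lform Ap
  | LGF of bool & lform Ap | LFG of bool & lform Ap.
Arguments LTrue {Ap}. Arguments LFalse {Ap}.

Fixpoint erase Ap (L : lform Ap) : formula Ap :=
  match L with
  | LTrue => FTrue | LFalse => FFalse | LAtom a => FAtom a | LNAtom a => FNAtom a
  | LAnd a b => FAnd (erase a) (erase b) | LOr a b => FOr (erase a) (erase b)
  | LX a => FX (erase a)
  | LU _ a b => FU (erase a) (erase b) | LW _ a b => FW (erase a) (erase b)
  | LGF _ a => FGF (erase a) | LFG _ a => FFG (erase a)
  end.

Definition fb Ap (t : bool) : formula Ap := if t then FTrue else FFalse.

Fixpoint nu Ap (L : lform Ap) : formula Ap :=
  match L with
  | LTrue => FTrue | LFalse => FFalse | LAtom a => FAtom a | LNAtom a => FNAtom a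
  | LAnd a b => FAnd (nu a) (nu b) | LOr a b => FOr (nu a) (nu b)
  | LX a => FX (nu a)
  | LU m a b => if m then FW (nu a) (nu b) else FFalse
  | LW _ a b => FW (nu a) (nu b)
  | LGF t _ => fb Ap t | LFG t _ => fb Ap t
  end.

Fixpoint mu Ap (L : lform Ap) : formula Ap :=
  match L with
  | LTrue => FTrue | LFalse => FFalse | LAtom a => FAtom a | LNAtom a => FNAtom a
  | LAnd a b => FAnd (mu a) (mu b) | LOr a b => FOr (mu a) (mu b)
  | LX a => FX (mu a)
  | LU _ a b => FU (mu a) (mu b)
  | LW n a b => if n then FTrue else FU (mu a) (mu b)
  | LGF t _ => fb Ap t | LFG t _ => fb Ap t
  end.

Fixpoint sig Ap (L : lform Ap) : formula Ap :=
  match L with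
  | LTrue => FTrue | LFalse => FFalse | LAtom a => FAtom a | LNAtom a => FNAtom a
  | LAnd a b => FAnd (sig a) (sig b) | LOr a b => FOr (sig a) (sig b)
  | LX a => FX (sig a)
  | LU _ a b => FU (sig a) (sig b)
  | LW n a b => if n then FU (sig a) (FOr (sig b) (FW (nu a) FFalse))
                else FU (sig a) (sig b)
  | LGF t _ => fb Ap t | LFG t _ => fb Ap t
  end.

Fixpoint lconds Ap (L : lform Ap) : formula Ap :=
  match L with
  | LTrue | LFalse | LAtom _ | LNAtom _ => FTrue
  | LAnd a b | LOr a b => FAnd (lconds a) (lconds b)
  | LX a => lconds a
  | LU m a b => FAnd (if m then FGF (FU (mu a) (mu b)) else FTrue)
                     (FAnd (lconds a) (lconds b))
  | LW n a b => FAnd (if n then FFG (FW (nu a) (nu b)) else FTrue)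
                     (FAnd (lconds a) (lconds b))
  | LGF t a => FAnd (if t then FGF (mu a) else FTrue) (lconds a)
  | LFG t a => FAnd (if t then FFG (nu a) else FTrue) (lconds a)
  end.

Fixpoint sound (Ap : finType) (w : word Ap) (L : lform Ap) : Prop :=
  match L with
  | LTrue | LFalse | LAtom _ | LNAtom _ => True
  | LAnd a b | LOr a b => sound w a /\ sound w b
  | LX a => sound w a
  | LU m a b => (m -> GFh w (FU (erase a) (erase b))) /\ sound w a /\ sound w b
  | LW n a b => (n -> FGh w (FW (erase a) (erase b))) /\ sound w a /\ sound w b
  | LGF t a => (t -> GFh w (erase a)) /\ sound w a
  | LFG t a => (t -> FGh w (erase a)) /\ sound w a
  end.

Fixpoint complete (Ap : finType) (w : word Ap) (L : lform Ap) : Prop :=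
  match L with
  | LTrue | LFalse | LAtom _ | LNAtom _ => True
  | LAnd a b | LOr a b => complete w a /\ complete w b
  | LX a => complete w a
  | LU m a b => (GFh w (FU (erase a) (erase b)) -> m) /\ complete w a /\ complete w b
  | LW n a b => (FGh w (FW (erase a) (erase b)) -> n) /\ complete w a /\ complete w b
  | LGF t a => (GFh w (erase a) -> t) /\ complete w a
  | LFG t a => (FGh w (erase a) -> t) /\ complete w a
  end.

Lemma holds_T (Ap : finType) (w : word Ap) i : holds w i FTrue.
Proof. by []. Qed.
Lemma holds_F (Ap : finType) (w : word Ap) i : ~ holds w i FFalse.
Proof. by []. Qed.

Lemma nGF (Ap : finType) (w : word Ap) f :
  ~ GFh w f -> exists n, forall k, n <= k -> ~ holds w k f.
Proof.
move=> H; apply: NNPP => H2; apply: H => n; apply: NNPP => H3; apply: H2.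
by exists n => k Hk Hh; apply: H3; exists k.
Qed.

Lemma G_FG (Ap : finType) (w : word Ap) i a b :
  (forall k, holds w (i + k) a) -> FGh w (FW a b).
Proof.
move=> HA; exists i => k Hk; apply/holds_W; left => j.
by have := HA (k - i + j); rewrite addnA subnKC.
Qed.

Lemma nu_sound (Ap : finType) (w : word Ap) L :
  sound w L -> forall i, holds w i (nu L) -> holds w i (erase L).
Proof.
elim: L => [||x|x|a IHa b IHb|a IHa b IHb|a IHa|m a IHa b IHb|n a IHa b IHb|t a IHa|t a IHa] //=.
- by move=> [Sa Sb] i [H1 H2]; split; [exact: IHa | exact: IHb].
- by move=> [Sa Sb] i [H1|H2]; [left; exact: IHa| right; exact: IHb].
- by move=> Sa i /holds_X H; apply/holds_X; exact: IHa.
- case: m => -[Sm [Sa Sb]] i; last by case.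
  move/holds_W => [HA|[k [Hb Ha]]].
  + have [k [Hk /holds_U [k' [Hb Ha']]]] := Sm erefl i.
    apply/holds_U; exists (k - i + k'); split; first by rewrite addnA subnKC.
    by move=> j _; apply: IHa.
  + apply/holds_U; exists k; split; first exact: IHb.
    by move=> j Hj; apply: IHa => //; apply: Ha.
- move=> [_ [Sa Sb]] i /holds_W [HA|[k [Hb Ha]]]; apply/holds_W.
  + by left=> k; apply: IHa.
  + right; exists k; split; first exact: IHb.
    by move=> j Hj; apply: IHa => //; apply: Ha.
- case: t => -[St Sa] i /= H; last by case: H.
  by apply/holds_GF; exact: St.
- case: t => -[St Sa] i /= H; last by case: H.
  by apply/holds_FG; exact: St.
Qed.

Lemma nu_complete (Ap : finType) (w : word Ap) L : complete w L ->
  exists i0, forall i, i0 <= i -> holds w i (erase L) -> holds w i (nu L).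
Proof.
elim: L => [||x|x|a IHa b IHb|a IHa b IHb|a IHa|m a IHa b IHb|n a IHa b IHb|t a IHa|t a IHa] /=;
  try by exists 0.
- move=> [/IHa [ia Ha] /IHb [ib Hb]]; exists (ia + ib) => i Hi [H1 H2].
  by split; [apply: Ha => //; lia | apply: Hb => //; lia].
- move=> [/IHa [ia Ha] /IHb [ib Hb]]; exists (ia + ib) => i Hi [H1|H2].
  + by left; apply: Ha => //; lia.
  + by right; apply: Hb => //; lia.
- move=> /IHa [ia Ha]; exists ia => i Hi /holds_X H; apply/holds_X.
  by apply: Ha => //; lia.
- case: m => -[Cm [/IHa [ia Ha] /IHb [ib Hb]]].
  + exists (ia + ib) => i Hi /holds_U [k [H1 H2]]; apply/holds_W; right.
    exists k; split; first by apply: Hb => //; lia.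
    by move=> j Hj; apply: Ha; [lia | apply: H2].
  + have [n Hn] : exists n, forall k, n <= k -> ~ holds w k (FU (erase a) (erase b)).
      by apply: nGF => /Cm.
    by exists n => i Hi H; case: (Hn i Hi H).
- move=> [_ [/IHa [ia Ha] /IHb [ib Hb]]].
  exists (ia + ib) => i Hi /holds_W [HA|[k [H1 H2]]]; apply/holds_W.
  + by left=> k; apply: Ha => //; lia.
  + right; exists k; split; first by apply: Hb => //; lia.
    by move=> j Hj; apply: Ha; [lia | apply: H2].
- move=> [Ct _]; exists 0 => i _ /holds_GF H; by rewrite (Ct H).
- move=> [Ct _]; exists 0 => i _ /holds_FG H; by rewrite (Ct H).
Qed.

Lemma mu_complete (Ap : finType) (w : word Ap) L :
  complete w L -> forall i, holds w i (erase L) -> holds w i (mu L).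
Proof.
elim: L => [||x|x|a IHa b IHb|a IHa b IHb|a IHa|m a IHa b IHb|n a IHa b IHb|t a IHa|t a IHa] //=.
- by move=> [Sa Sb] i [H1 H2]; split; [exact: IHa | exact: IHb].
- by move=> [Sa Sb] i [H1|H2]; [left; exact: IHa| right; exact: IHb].
- by move=> Sa i /holds_X H; apply/holds_X; exact: IHa.
- move=> [_ [Ca Cb]] i /holds_U [k [H1 H2]]; apply/holds_U; exists k; split.
  + exact: IHb.
  + by move=> j Hj; apply: IHa => //; apply: H2.
- case: n => -[Cn [Ca Cb]] i // /holds_W [HA|[k [H1 H2]]].
  + by have := Cn (G_FG (erase b) HA).
  + apply/holds_U; exists k; split; first exact: IHb.
    by move=> j Hj; apply: IHa => //; apply: H2.
- by move=> [Ct _] i /holds_GF H; rewrite (Ct H).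
- by move=> [Ct _] i /holds_FG H; rewrite (Ct H).
Qed.

Lemma mu_sound (Ap : finType) (w : word Ap) L : sound w L ->
  exists i0, forall i, i0 <= i -> holds w i (mu L) -> holds w i (erase L).
Proof.
elim: L => [||x|x|a IHa b IHb|a IHa b IHb|a IHa|m a IHa b IHb|n a IHa b IHb|t a IHa|t a IHa] /=;
  try by exists 0.
- move=> [/IHa [ia Ha] /IHb [ib Hb]]; exists (ia + ib) => i Hi [H1 H2].
  by split; [apply: Ha => //; lia | apply: Hb => //; lia].
- move=> [/IHa [ia Ha] /IHb [ib Hb]]; exists (ia + ib) => i Hi [H1|H2].
  + by left; apply: Ha => //; lia.
  + by right; apply: Hb => //; lia.
- move=> /IHa [ia Ha]; exists ia => i Hi /holds_X H; apply/holds_X.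
  by apply: Ha => //; lia.
- move=> [_ [/IHa [ia Ha] /IHb [ib Hb]]].
  exists (ia + ib) => i Hi /holds_U [k [H1 H2]]; apply/holds_U.
  exists k; split; first by apply: Hb => //; lia.
  by move=> j Hj; apply: Ha; [lia | apply: H2].
- case: n => -[Sn [/IHa [ia Ha] /IHb [ib Hb]]].
  + by have [n Hn] := Sn erefl; exists n => i Hi _; apply: Hn.
  + exists (ia + ib) => i Hi /holds_U [k [H1 H2]]; apply/holds_W; right.
    exists k; split; first by apply: Hb => //; lia.
    by move=> j Hj; apply: Ha; [lia | apply: H2].
- case: t => -[St _]; exists 0 => i _ H; last by case: H.
  by apply/holds_GF; exact: St.
- case: t => -[St _]; exists 0 => i _ H; last by case: H.
  by apply/holds_FG; exact: St.
Qed.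

Lemma sig_sound (Ap : finType) (w : word Ap) L :
  sound w L -> forall i, holds w i (sig L) -> holds w i (erase L).
Proof.
elim: L => [||x|x|a IHa b IHb|a IHa b IHb|a IHa|m a IHa b IHb|n a IHa b IHb|t a IHa|t a IHa] //=.
- by move=> [Sa Sb] i [H1 H2]; split; [exact: IHa | exact: IHb].
- by move=> [Sa Sb] i [H1|H2]; [left; exact: IHa| right; exact: IHb].
- by move=> Sa i /holds_X H; apply/holds_X; exact: IHa.
- move=> [_ [Ca Cb]] i /holds_U [k [H1 H2]]; apply/holds_U; exists k; split.
  + exact: IHb.
  + by move=> j Hj; apply: IHa => //; apply: H2.
- case: n => -[Sn [Sa Sb]] i /holds_U [k [H1 H2]]; apply/holds_W.
  + have [H1'|H1'] : holds w (i + k) (sig b) \/ holds w (i + k) (FW (nu a) FFalse) := H1.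
    * right; exists k; split; first exact: IHb.
      by move=> j Hj; apply: IHa => //; apply: H2.
    * have [HG|[k' [[] _]]] := (holds_W _ _ _ _).1 H1'.
      left=> j; case: (ltnP j k) => Hj; first by apply: IHa => //; apply: H2.
      apply: (nu_sound Sa); have := HG (j - k).
      by rewrite -addnA subnKC.
  + right; exists k; split; first exact: IHb.
    by move=> j Hj; apply: IHa => //; apply: H2.
- case: t => -[St Sa] i /= H; last by case: H.
  by apply/holds_GF; exact: St.
- case: t => -[St Sa] i /= H; last by case: H.
  by apply/holds_FG; exact: St.
Qed.

Lemma sig_complete (Ap : finType) (w : word Ap) L :
  complete w L -> forall i, holds w i (erase L) -> holds w i (sig L).
Proof.
elim: L => [||x|x|a IHa b IHb|a IHa b IHb|a IHa|m a IHa b IHb|n a IHa b IHb|t a IHa|t a IHa] //=.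
- by move=> [Sa Sb] i [H1 H2]; split; [exact: IHa | exact: IHb].
- by move=> [Sa Sb] i [H1|H2]; [left; exact: IHa| right; exact: IHb].
- by move=> Sa i /holds_X H; apply/holds_X; exact: IHa.
- move=> [_ [Ca Cb]] i /holds_U [k [H1 H2]]; apply/holds_U; exists k; split.
  + exact: IHb.
  + by move=> j Hj; apply: IHa => //; apply: H2.
- case: n => -[Cn [Ca Cb]] i HW;
    have [HA|[k [H1 H2]]] := (holds_W w i (erase a) (erase b)).1 HW.
  + have [i0 H0] := nu_complete Ca.
    apply/holds_U; exists i0; split.
    * have HWa : holds w (i + i0) (FW (nu a) FFalse).
        apply/holds_W; left => k'; apply: H0; first lia.
        by rewrite -addnA; apply: HA.
      by right.
    * by move=> j Hj; apply: IHa => //; apply: HA.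
  + apply/holds_U; exists k; split; first by left; exact: IHb.
    by move=> j Hj; apply: IHa => //; apply: H2.
  + by have := Cn (G_FG (erase b) HA).
  + apply/holds_U; exists k; split; first exact: IHb.
    by move=> j Hj; apply: IHa => //; apply: H2.
- by move=> [Ct _] i /holds_GF H; rewrite (Ct H).
- by move=> [Ct _] i /holds_FG H; rewrite (Ct H).
Qed.

Lemma GF_ev (Ap : finType) (w : word Ap) f g : GFh w f ->
  (exists i0, forall i, i0 <= i -> holds w i f -> holds w i g) -> GFh w g.
Proof.
move=> H [i0 H0] n; have [k [Hk Hf]] := H (n + i0).
by exists k; split; [lia | apply: H0 => //; lia].
Qed.

Lemma FG_ev (Ap : finType) (w : word Ap) f g : FGh w f ->
  (exists i0, forall i, i0 <= i -> holds w i f -> holds w i g) -> FGh w g.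
Proof.
move=> [n H] [i0 H0]; exists (n + i0) => k Hk.
by apply: H0; [lia | apply: H; lia].
Qed.

Lemma holds_And (Ap : finType) (w : word Ap) i a b :
  holds w i (FAnd a b) <-> holds w i a /\ holds w i b.
Proof. by []. Qed.

Lemma lconds_sound (Ap : finType) (w : word Ap) L i :
  holds w i (lconds L) -> sound w L.
Proof.
elim: L => [||x|x|a IHa b IHb|a IHa b IHb|a IHa|m a IHa b IHb|n a IHa b IHb|t a IHa|t a IHa] //=.
- by move=> /holds_And [/IHa H1 /IHb H2].
- by move=> /holds_And [/IHa H1 /IHb H2].
- move=> /holds_And [Hm /holds_And [/IHa Sa /IHb Sb]]; split=> //; case: m Hm => // /holds_GF H _.
  apply: (GF_ev H); have := @mu_sound Ap w (LU false a b); apply => //.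
- move=> /holds_And [Hn /holds_And [/IHa Sa /IHb Sb]]; split=> //; case: n Hn => // /holds_FG H _.
  apply: (FG_ev H); exists 0 => j _; exact: (@nu_sound Ap w (LW false a b)).
- move=> /holds_And [Ht /IHa Sa]; split=> //; case: t Ht => // /holds_GF H _.
  exact: (GF_ev H (mu_sound Sa)).
- move=> /holds_And [Ht /IHa Sa]; split=> //; case: t Ht => // /holds_FG H _.
  by apply: (FG_ev H); exists 0 => j _; exact: nu_sound.
Qed.

Lemma lconds_complete (Ap : finType) (w : word Ap) L i :
  sound w L -> complete w L -> holds w i (lconds L).
Proof.
elim: L => [||x|x|a IHa b IHb|a IHa b IHb|a IHa|m a IHa b IHb|n a IHa b IHb|t a IHa|t a IHa] //=.
- by move=> [Sa Sb] [Ca Cb]; split; [exact: IHa | exact: IHb].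
- by move=> [Sa Sb] [Ca Cb]; split; [exact: IHa | exact: IHb].
- move=> [Sm [Sa Sb]] [Cm [Ca Cb]]; apply/holds_And; split; last by apply/holds_And; split; [exact: IHa | exact: IHb].
  case: m Sm Cm => // Sm Cm; apply/holds_GF; apply: (GF_ev (Sm erefl)).
  exists 0 => j _; exact: (@mu_complete Ap w (LU true a b)).
- move=> [Sm [Sa Sb]] [Cm [Ca Cb]]; apply/holds_And; split; last by apply/holds_And; split; [exact: IHa | exact: IHb].
  case: n Sm Cm => // Sm Cm; apply/holds_FG; apply: (FG_ev (Sm erefl)).
  exact: (@nu_complete Ap w (LW true a b)).
- move=> [St Sa] [Ct Ca]; apply/holds_And; split; last exact: IHa.
  case: t St Ct => // St Ct; apply/holds_GF; apply: (GF_ev (St erefl)).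
  by exists 0 => j _; exact: mu_complete.
- move=> [St Sa] [Ct Ca]; apply/holds_And; split; last exact: IHa.
  case: t St Ct => // St Ct; apply/holds_FG; apply: (FG_ev (St erefl)).
  exact: nu_complete.
Qed.

Fixpoint prod2 A B C (g : A -> B -> C) (l1 : seq A) (l2 : seq B) : seq C :=
  match l1 with [::] => [::] | x :: t => map (g x) l2 ++ prod2 g t l2 end.

Lemma In_map A B (f : A -> B) x l : List.In x l -> List.In (f x) (map f l).
Proof. by elim: l => //= y l IH [->|H]; [left | right; apply: IH]. Qed.

Lemma In_mapE A B (f : A -> B) z l : List.In z (map f l) -> exists x, List.In x l /\ z = f x.
Proof.
elim: l => //= y l IH [<-|/IH [x [H1 H2]]]; first by exists y; split; [left|].
by exists x; split; [right|].
Qed.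

Lemma In_cat A (x : A) l1 l2 : List.In x (l1 ++ l2) <-> List.In x l1 \/ List.In x l2.
Proof. exact: List.in_app_iff. Qed.

Lemma In_prod2 A B C (g : A -> B -> C) x y l1 l2 :
  List.In x l1 -> List.In y l2 -> List.In (g x y) (prod2 g l1 l2).
Proof.
elim: l1 => //= x' l1 IH [<-|H] H2; apply/In_cat; first by left; apply: In_map.
by right; apply: IH.
Qed.

Lemma In_prod2E A B C (g : A -> B -> C) z l1 l2 :
  List.In z (prod2 g l1 l2) -> exists x y, List.In x l1 /\ List.In y l2 /\ z = g x y.
Proof.
elim: l1 => //= x' l1 IH H; have [H'|H'] := (In_cat _ _ _).1 H.
- have [y [H1 H2]] := In_mapE H'.
  by exists x', y; split; [left|].
- have [x [y [H1 [H2 H3]]]] := IH H'.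
  by exists x, y; split; [right|].
Qed.

Lemma size_prod2 A B C (g : A -> B -> C) l1 l2 :
  size (prod2 g l1 l2) = size l1 * size l2.
Proof. by elim: l1 => //= x l1 IH; rewrite size_cat size_map IH mulSn. Qed.

Fixpoint labs (Ap : Type) (f : formula Ap) : seq (lform Ap) :=
  match f with
  | FTrue => [:: LTrue] | FFalse => [:: LFalse]
  | FAtom a => [:: LAtom a] | FNAtom a => [:: LNAtom a]
  | FAnd a b => prod2 (@LAnd Ap) (labs a) (labs b)
  | FOr a b => prod2 (@LOr Ap) (labs a) (labs b)
  | FX a => map (@LX Ap) (labs a)
  | FU a b => prod2 (LU true) (labs a) (labs b) ++ prod2 (LU false) (labs a) (labs b)
  | FW a b => prod2 (LW true) (labs a) (labs b) ++ prod2 (LW false) (labs a) (labs b)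
  | FGF a => map (LGF true) (labs a) ++ map (LGF false) (labs a)
  | FFG a => map (LFG true) (labs a) ++ map (LFG false) (labs a)
  end.

Lemma labs_erase (Ap : Type) (f : formula Ap) L : List.In L (labs f) -> erase L = f.
Proof.
elim: f L => [||x|x|a IHa b IHb|a IHa b IHb|a IHa|a IHa b IHb|a IHa b IHb|a IHa|a IHa] L /=.
- by case=> // <-.
- by case=> // <-.
- by case=> // <-.
- by case=> // <-.
- by move=> H; have [x [y [/IHa <- [/IHb <- ->]]]] := In_prod2E H.
- by move=> H; have [x [y [/IHa <- [/IHb <- ->]]]] := In_prod2E H.
- by move=> H; have [x [/IHa <- ->]] := In_mapE H.
- by move=> H; case: ((In_cat _ _ _).1 H) => H'; have [x [y [/IHa <- [/IHb <- ->]]]] := In_prod2E H'.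
- by move=> H; case: ((In_cat _ _ _).1 H) => H'; have [x [y [/IHa <- [/IHb <- ->]]]] := In_prod2E H'.
- by move=> H; case: ((In_cat _ _ _).1 H) => H'; have [x [/IHa <- ->]] := In_mapE H'.
- by move=> H; case: ((In_cat _ _ _).1 H) => H'; have [x [/IHa <- ->]] := In_mapE H'.
Qed.

Lemma labs_exists (Ap : finType) (w : word Ap) (f : formula Ap) :
  exists L, List.In L (labs f) /\ erase L = f /\ sound w L /\ complete w L.
Proof.
elim: f => [||x|x|a IHa b IHb|a IHa b IHb|a IHa|a IHa b IHb|a IHa b IHb|a IHa|a IHa] /=.
- by exists LTrue; split; [left|].
- by exists LFalse; split; [left|].
- by exists (LAtom x); split; [left|].
- by exists (LNAtom x); split; [left|].
- have [La [Ia [Ea [Sa Ca]]]] := IHa; have [Lb [Ib [Eb [Sb Cb]]]] := IHb; subst a b.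
  exists (LAnd La Lb); split; first by simpl; apply: In_prod2.
  by repeat split.
- have [La [Ia [Ea [Sa Ca]]]] := IHa; have [Lb [Ib [Eb [Sb Cb]]]] := IHb; subst a b.
  exists (LOr La Lb); split; first by simpl; apply: In_prod2.
  by repeat split.
- have [La [Ia [Ea [Sa Ca]]]] := IHa; subst a.
  exists (LX La); split; first by simpl; apply: In_map.
  by repeat split.
- have [La [Ia [Ea [Sa Ca]]]] := IHa; have [Lb [Ib [Eb [Sb Cb]]]] := IHb; subst a b.
  case: (classic (GFh w (FU (erase La) (erase Lb)))) => H.
  + exists (LU true La Lb); split; first by simpl; apply/In_cat; left; apply: In_prod2.
    by repeat split.
  + exists (LU false La Lb); split; first by simpl; apply/In_cat; right; apply: In_prod2.
    by repeat split => //.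
- have [La [Ia [Ea [Sa Ca]]]] := IHa; have [Lb [Ib [Eb [Sb Cb]]]] := IHb; subst a b.
  case: (classic (FGh w (FW (erase La) (erase Lb)))) => H.
  + exists (LW true La Lb); split; first by simpl; apply/In_cat; left; apply: In_prod2.
    by repeat split.
  + exists (LW false La Lb); split; first by simpl; apply/In_cat; right; apply: In_prod2.
    by repeat split => //.
- have [La [Ia [Ea [Sa Ca]]]] := IHa; subst a.
  case: (classic (GFh w (erase La))) => H.
  + exists (LGF true La); split; first by simpl; apply/In_cat; left; apply: In_map.
    by repeat split.
  + exists (LGF false La); split; first by simpl; apply/In_cat; right; apply: In_map.
    by repeat split => //.
- have [La [Ia [Ea [Sa Ca]]]] := IHa; subst a.
  case: (classic (FGh w (erase La))) => H.
  + exists (LFG true La); split; first by simpl; apply/In_cat; left; apply: In_map.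
    by repeat split.
  + exists (LFG false La); split; first by simpl; apply/In_cat; right; apply: In_map.
    by repeat split => //.
Qed.

Lemma nf_noU (Ap : Type) (f : formula Ap) : ~~ hasU f -> ~~ hasLimit f -> normal_form f.
Proof.
elim: f => //= [a IHa b IHb|a IHa b IHb|a IHa|a IHa b IHb].
- by move=> /norP[Ua Ub] /norP[La Lb]; rewrite IHa // IHb.
- by move=> /norP[Ua Ub] /norP[La Lb]; rewrite IHa // IHb.
- by move=> Ua La; rewrite La IHa.
- by move=> /norP[Ua Ub] /norP[La Lb]; rewrite Ua Ub La Lb IHa // IHb.
Qed.

Lemma nf_noW (Ap : Type) (f : formula Ap) : ~~ hasW f -> ~~ hasLimit f -> normal_form f.
Proof.
elim: f => //= [a IHa b IHb|a IHa b IHb|a IHa|a IHa b IHb].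
- by move=> /norP[Ua Ub] /norP[La Lb]; rewrite IHa // IHb.
- by move=> /norP[Ua Ub] /norP[La Lb]; rewrite IHa // IHb.
- by move=> Ua La; rewrite La IHa.
- by move=> /norP[Ua Ub] /norP[La Lb]; rewrite La Lb IHa // IHb.
Qed.

Ltac bsplit := repeat match goal with H : is_true (_ && _) |- _ => case/andP: H => ? ? end;
  rewrite ?negb_or; repeat (apply/andP; split); auto.

Lemma nu_flags (Ap : Type) (L : lform Ap) : ~~ hasU (nu L) && ~~ hasLimit (nu L).
Proof.
elim: L => [||x|x|a IHa b IHb|a IHa b IHb|a IHa|m a IHa b IHb|m a IHa b IHb|m a IHa|m a IHa] /=;
  try case: m => /=; bsplit.
Qed.

Lemma mu_flags (Ap : Type) (L : lform Ap) : ~~ hasW (mu L) && ~~ hasLimit (mu L).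
Proof.
elim: L => [||x|x|a IHa b IHb|a IHa b IHb|a IHa|m a IHa b IHb|m a IHa b IHb|m a IHa|m a IHa] /=;
  try case: m => /=; bsplit.
Qed.

Lemma nu_nf (Ap : Type) (L : lform Ap) : normal_form (nu L).
Proof. by have /andP[? ?] := nu_flags L; apply: nf_noU. Qed.
Lemma mu_nf (Ap : Type) (L : lform Ap) : normal_form (mu L).
Proof. by have /andP[? ?] := mu_flags L; apply: nf_noW. Qed.

Lemma sig_nf (Ap : Type) (L : lform Ap) : ~~ hasLimit (sig L) && normal_form (sig L).
Proof.
elim: L => [||x|x|a IHa b IHb|a IHa b IHb|a IHa|m a IHa b IHb|m a IHa b IHb|m a IHa|m a IHa] /=;
  try case: m => /=; try have := nu_flags a; try have := nu_nf a; intros; bsplit.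
Qed.

Lemma lconds_nf (Ap : Type) (L : lform Ap) : normal_form (lconds L).
Proof.
elim: L => [||x|x|a IHa b IHb|a IHa b IHb|a IHa|m a IHa b IHb|m a IHa b IHb|m a IHa|m a IHa] /=;
  try case: m => /=;
  try have := nu_flags a; try have := mu_flags a; try have := nu_nf a; try have := mu_nf a;
  try have := nu_flags b; try have := mu_flags b; try have := nu_nf b; try have := mu_nf b;
  intros; bsplit.
Qed.

Lemma fsize_gt0 (Ap : Type) (f : formula Ap) : 0 < fsize f.
Proof. by case: f. Qed.

Lemma pow4 n : 0 < n -> n < 4 ^ n /\ 4 <= 4 ^ n.
Proof.
move=> Hn; split; first exact: ltn_expl.
by rewrite -{1}(expn1 4) leq_exp2l.
Qed.

Lemma fsize_nu (Ap : Type) (L : lform Ap) : fsize (nu L) <= fsize (erase L).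
Proof.
elim: L => [||x|x|a IHa b IHb|a IHa b IHb|a IHa|m a IHa b IHb|m a IHa b IHb|m a IHa|m a IHa] /=;
  try case: m => /=; lia.
Qed.

Lemma fsize_mu (Ap : Type) (L : lform Ap) : fsize (mu L) <= fsize (erase L).
Proof.
elim: L => [||x|x|a IHa b IHb|a IHa b IHb|a IHa|m a IHa b IHb|m a IHa b IHb|m a IHa|m a IHa] /=;
  try case: m => /=; lia.
Qed.

Lemma arith2 X Y A B : 4 <= X -> 4 <= Y -> A < X -> B < Y ->
  X + Y + A + B + 4 <= 4 * X * Y.
Proof. move=> *; nia. Qed.

Lemma arith1 X A : 4 <= X -> A < X -> X + A + 2 <= 4 * X.
Proof. move=> *; lia. Qed.

Lemma fsize_sig (Ap : Type) (L : lform Ap) : fsize (sig L) <= 4 ^ fsize (erase L).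
Proof.
elim: L => [||x|x|a IHa b IHb|a IHa b IHb|a IHa|m a IHa b IHb|m a IHa b IHb|m a IHa|m a IHa] /=;
  try case: m => /=; rewrite ?expnS ?expnD;
  try have [? ?] := pow4 (fsize_gt0 (erase a));
  try have [? ?] := pow4 (fsize_gt0 (erase b));
  try have := fsize_nu a; intros; nia.
Qed.

Lemma fsize_lconds (Ap : Type) (L : lform Ap) : fsize (lconds L) <= 4 ^ fsize (erase L).
Proof.
elim: L => [||x|x|a IHa b IHb|a IHa b IHb|a IHa|m a IHa b IHb|m a IHa b IHb|m a IHa|m a IHa] /=;
  try case: m => /=; rewrite ?expnS ?expnD;
  try have [? ?] := pow4 (fsize_gt0 (erase a));
  try have [? ?] := pow4 (fsize_gt0 (erase b));
  try have := fsize_nu a; try have := fsize_mu a;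
  try have := fsize_nu b; try have := fsize_mu b;
  intros; nia.
Qed.

Lemma size_labs (Ap : Type) (f : formula Ap) : size (labs f) <= 4 ^ fsize f.
Proof.
elim: f => [||x|x|a IHa b IHb|a IHa b IHb|a IHa|a IHa b IHb|a IHa b IHb|a IHa|a IHa] /=;
  rewrite ?size_cat ?size_prod2 ?size_map ?expnS ?expnD //;
  try have [? ?] := pow4 (fsize_gt0 a);
  try have [? ?] := pow4 (fsize_gt0 b); nia.
Qed.

Fixpoint bigor (Ap : Type) (l : seq (formula Ap)) : formula Ap :=
  match l with [::] => FFalse | x :: t => FOr x (bigor t) end.

Lemma holds_bigor (Ap : finType) (w : word Ap) i l :
  holds w i (bigor l) <-> exists x, List.In x l /\ holds w i x.
Proof.
elim: l => [|x l IH] /=; first by split=> [[]|[x [[]]]].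
split.
- move=> H; have [H1|H1] : holds w i x \/ holds w i (bigor l) := H.
  + by exists x; split; [left|].
  + by have [y [Hy Hy']] := IH.1 H1; exists y; split; [right|].
- move=> [y [[<-|Hy] Hy']]; first by left.
  by right; apply: IH.2; exists y.
Qed.

Lemma bigor_nf (Ap : Type) (l : seq (formula Ap)) :
  (forall x, List.In x l -> normal_form x) -> normal_form (bigor l).
Proof.
elim: l => //= x l IH H; rewrite H; last by left.
by rewrite IH // => y Hy; apply: H; right.
Qed.

Lemma fsize_bigor (Ap : Type) (l : seq (formula Ap)) M :
  (forall x, List.In x l -> fsize x <= M) -> fsize (bigor l) <= size l * M.+1 + 1.
Proof.
elim: l => //= x l IH H; have Hx := H x (or_introl erefl).
have := IH (fun y Hy => H y (or_intror Hy)); rewrite mulSn; lia.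
Qed.

Unset Implicit Arguments.

Theorem theorem3 (Ap : finType) (phi : formula Ap) :
  exists phi' : formula Ap,
    normal_form phi' /\ fequiv phi' phi /\ fsize phi' <= 4 ^ (7 * fsize phi).
Proof.
exists (bigor (map (fun L => FAnd (sig L) (lconds L)) (labs phi))); split; last split.
- apply: bigor_nf => x Hx; have [L [_ ->]] := In_mapE Hx; rewrite /=.
  by have /andP[_ ->] := sig_nf L; rewrite lconds_nf.
- move=> w; split=> H.
  + apply/holds0; have [x [Hx0 Hx]] := (holds_bigor _ _ _).1 ((holds0 _ _).1 H).
    have [L [HL Ex]] := In_mapE Hx0; subst x.
    have [Hs Hc] := (holds_And _ _ _ _).1 Hx.
    rewrite -(labs_erase HL); exact: (sig_sound (lconds_sound Hc)).
  + have [L [HL [EL [SL CL]]]] := labs_exists w phi.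
    apply/holds0; apply/holds_bigor; exists (FAnd (sig L) (lconds L)); split.
    * exact: (In_map (fun L => FAnd (sig L) (lconds L)) HL).
    * apply/holds_And; split; last exact: lconds_complete.
      by apply: sig_complete => //; rewrite EL; apply/holds0.
- set n := fsize phi.
  have [Hn H4] := pow4 (fsize_gt0 phi).
  have Hl := size_labs phi.
  have Hb := @fsize_bigor Ap (map (fun L => FAnd (sig L) (lconds L)) (labs phi)) (2 * 4 ^ n).+1.
  have : fsize (bigor [seq FAnd (sig L) (lconds L) | L <- labs phi]) <=
         size (labs phi) * (2 * 4 ^ n).+2 + 1.
    rewrite -(size_map (fun L => FAnd (sig L) (lconds L))); apply: Hb.
    move=> x Hx; have [L [HL ->]] := In_mapE Hx; rewrite /=.
    have := fsize_sig L; have := fsize_lconds L; rewrite (labs_erase HL) -/n.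
    lia.
  move=> H; apply: (leq_trans H).
  rewrite [7 * n]mulnC expnM.
  move: Hl H4; rewrite -/n; move: (4 ^ n) (size (labs phi)) => Z s Hs HZ.
  have HZ3 : Z ^ 3 <= Z ^ 7 by rewrite leq_exp2l //; lia.
  have E3 : Z ^ 3 = Z * (Z * Z) by rewrite !expnS expn0 muln1.
  have H1 : (2 * Z).+2 * s <= (2 * Z).+2 * Z by rewrite leq_mul2l Hs orbT.
  have H2 : (2 * Z).+2 * Z + 1 <= 4 * (Z * Z) by nia.
  have H3 : 4 * (Z * Z) <= Z * (Z * Z) by rewrite leq_mul2r; apply/orP; right; lia.
  lia.
Qed.
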